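(* Algorithm $R_A$ (described in the context) is group-strategyproof over the domain of all monotonic profiles (for $n$ agents and alternatives $\{A,B\}$) that admit a unique stable assignment.
   Context: Agents $V=\{v_1,\dots,v_n\}$; two alternatives $A,B$. Each agent $v_i$ has a strict total order $\succ_i$ on $\{A,B\}\times\{1,\dots,n\}$, where $(S,j)$ means being in the community adopting $S$ of size $j$; it is monotonic if $(S,j)\succ_i(S,k)$ whenever $k<j$. An assignment is a map $f:V\to\{A,B\}$; $v_i$ prefers $f$ to $g$ if $(f(v_i),|f^{-1}(f(v_i))|)\succ_i(g(v_i),|g^{-1}(g(v_i))|)$. An assignment $f$ is stable if there is no assignment $f'\neq f$ such that every agent $v_i$ with $f'(v_i)\neq f(v_i)$ prefers $f'$ to $f$. Algorithm $R_A$: set $V_A=V$, $V_B=\emptyset$, $a=|V_A|$, $b=|V_B|$. Repeat: let $k$ be the largest $j\in\{1,\dots,a\}$ with $|\{v_i\in V_A:(B,b+j)\succ_i(A,a)\}|\ge j$, or $k=0$ if none exists. If $k=0$, output $f$ with $f^{-1}(A)=V_A$, $f^{-1}(B)=V_B$. Otherwise let $X=\{v_i\in V_A:(B,b+k)\succ_i(A,a)\}$, move $X$ from $V_A$ to $V_B$, update $a,b$, and repeat. A rule $R$ is group-strategyproof over a domain $D$ of profiles if for every $V\in D$ with $f=R(V)$ there is no nonempty set $U\subseteq V$ of agents who can simultaneously replace their orders by monotonic orders, producing a profile $V'$ with $f'=R(V')$, such that every $v_i\in U$ prefers $f'$ to $f$ according to her true order $\succ_i$. *)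

(* Defs.v *)
From HB Require Import structures.
From mathcomp Require Import all_boot.
Set Implicit Arguments. Unset Strict Implicit. Unset Printing Implicit Defensive.

Inductive alt := A | B.

Definition alt_eqb (x y : alt) : bool :=
  match x, y with A, A | B, B => true | _, _ => false end.
Lemma alt_eqP : Equality.axiom alt_eqb.
Proof. by case; case; constructor. Qed.
HB.instance Definition _ := hasDecEq.Build alt alt_eqP.

(* An outcome (S, j): being in the community adopting S, of size j. *)
Definition outcome := (alt * nat)%type.

Definition in_dom (n : nat) (x : outcome) : bool := (1 <= x.2 <= n).

(* [ord x y] reads "x is strictly preferred to y". *)
Definition strict_total_order (n : nat) (ord : rel outcome) : Prop :=
  [/\ (forall x, in_dom n x -> ~~ ord x x),
      (forall x y z, in_dom n x -> in_dom n y -> in_dom n z ->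
                     ord x y -> ord y z -> ord x z) &
      (forall x y, in_dom n x -> in_dom n y -> x <> y -> ord x y \/ ord y x)].

Definition monotonic_order (n : nat) (ord : rel outcome) : Prop :=
  strict_total_order n ord /\
  (forall (S : alt) (j k : nat), 1 <= k -> k < j -> j <= n -> ord (S, j) (S, k)).

Definition profile (n : nat) := 'I_n -> rel outcome.

Definition monotonic_profile (n : nat) (P : profile n) : Prop :=
  forall i, monotonic_order n (P i).

Definition assignment (n : nat) := {ffun 'I_n -> alt}.

Definition csize (n : nat) (f : assignment n) (S : alt) : nat :=
  #|[set v | f v == S]|.

Definition outcome_of (n : nat) (f : assignment n) (i : 'I_n) : outcome :=
  (f i, csize f (f i)).

Definition prefers (n : nat) (ord : rel outcome) (i : 'I_n) (f g : assignment n) : bool :=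
  ord (outcome_of f i) (outcome_of g i).

Definition stable (n : nat) (P : profile n) (f : assignment n) : Prop :=
  ~ exists f' : assignment n, f' <> f /\
      (forall i, f' i <> f i -> prefers (P i) i f' f).

Definition unique_stable (n : nat) (P : profile n) : Prop :=
  exists f, stable P f /\ forall g, stable P g -> g = f.

Definition RA_count (n : nat) (P : profile n) (VA : {set 'I_n}) (j : nat) : nat :=
  let a := #|VA| in let b := n - a in
  #|[set i in VA | P i (B, b + j) (A, a)]|.

(* largest j in {1..a} with count >= j, or 0 if none *)
Definition RA_k (n : nat) (P : profile n) (VA : {set 'I_n}) : nat :=
  \max_(j < #|VA|.+1 | (0 < (j : nat)) && (j <= RA_count P VA j)) (j : nat).

Definition RA_step (n : nat) (P : profile n) (VA : {set 'I_n}) : option {set 'I_n} :=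
  let k := RA_k P VA in
  if k == 0 then None
  else let a := #|VA| in let b := n - a in
       Some (VA :\: [set i in VA | P i (B, b + k) (A, a)]).

Fixpoint RA_run (n : nat) (P : profile n) (fuel : nat) (VA : {set 'I_n}) : {set 'I_n} :=
  match fuel with
  | 0 => VA
  | fuel'.+1 => match RA_step P VA with
                | None => VA
                | Some VA' => RA_run P fuel' VA'
                end
  end.

(* Each non-terminal round removes k >= 1 agents from V_A, so at most n
   rounds move agents; fuel n.+1 therefore always reaches the k = 0 exit. *)
Definition R_A (n : nat) (P : profile n) : assignment n :=
  let VA := RA_run P n.+1 [set: 'I_n] in
  [ffun i => if i \in VA then A else B].

Definition group_strategyproof (n : nat) (R : profile n -> assignment n)
    (D : profile n -> Prop) : Prop :=
  forall P : profile n, D P ->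
  ~ exists (U : {set 'I_n}) (P' : profile n),
      [/\ U != set0,
          (forall i, i \notin U -> P' i = P i),
          (forall i, i \in U -> monotonic_order n (P' i)) &
          (forall i, i \in U -> prefers (P i) i (R P') (R P))].

(* Main.v *)
Require Import Defs.
From HB Require Import structures.
From mathcomp Require Import all_boot.
From mathcomp Require Import zify.
Set Implicit Arguments. Unset Strict Implicit. Unset Printing Implicit Defensive.


Lemma indomP n (S : alt) j : 1 <= j -> j <= n -> in_dom n (S, j).
Proof. by move=> h1 h2; rewrite /in_dom /= h1 h2. Qed.

Lemma mono_upl n (o : rel outcome) S j j' y : monotonic_order n o -> in_dom n y ->
  1 <= j -> j <= j' -> j' <= n -> o (S,j) y -> o (S,j') y.
Proof.
case=> [[irr tr tot] mon] dy h1 h2 h3 h.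
case: (ltngtP j j') => [lt|gt|<-//]; last by lia.
apply: (tr _ (S,j)) => //; try apply: indomP; try lia.
by apply: mon; lia.
Qed.

Lemma mono_downr n (o : rel outcome) x S j j' : monotonic_order n o -> in_dom n x ->
  1 <= j' -> j' <= j -> j <= n -> o x (S,j) -> o x (S,j').
Proof.
case=> [[irr tr tot] mon] dx h1 h2 h3 h.
case: (ltngtP j' j) => [lt|gt|->//]; last by lia.
apply: (tr _ (S,j)) => //; try apply: indomP; try lia.
by apply: mon; lia.
Qed.

Lemma asym n (o : rel outcome) x y : monotonic_order n o -> in_dom n x -> in_dom n y ->
  o x y -> o y x -> False.
Proof.
case=> [[irr tr tot] mon] dx dy h1 h2.
by move: (irr x dx); rewrite (tr x y x dx dy dx h1 h2).
Qed.

Lemma card_le_n n (S : {set 'I_n}) : #|S| <= n.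
Proof. by have := max_card (mem S); rewrite card_ord. Qed.

Lemma RA_k_max n (P : profile n) (VA : {set 'I_n}) j : 0 < j -> j <= #|VA| ->
  j <= RA_count P VA j -> j <= RA_k P VA.
Proof.
move=> h1 h2 h3; rewrite /RA_k.
have hj : j < #|VA|.+1 by [].
apply: (@leq_bigmax_cond _ _ (fun j : 'I_ _ => nat_of_ord j) (Ordinal hj)) => /=.
by rewrite h1 h3.
Qed.

Lemma RA_k_pos n (P : profile n) (VA : {set 'I_n}) : RA_k P VA != 0 ->
  [/\ 0 < RA_k P VA, RA_k P VA <= RA_count P VA (RA_k P VA) & RA_k P VA <= #|VA|].
Proof.
rewrite /RA_k.
case: (pickP (fun j : 'I_#|VA|.+1 => (0 < (j:nat)) && (j <= RA_count P VA j)))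
   => [j0 Pj0 | none].
  have hc : 0 < #|(fun j : 'I_#|VA|.+1 => (0 < (j:nat)) && (j <= RA_count P VA j))|.
    by apply/card_gt0P; exists j0.
  have [i0 Pi0 ->] := eq_bigmax_cond (fun j : 'I_ _ => nat_of_ord j) hc.
  move=> _; move: Pi0; rewrite unfold_in => /andP[-> ->]; split=> //.
  by rewrite -ltnS ltn_ord.
by rewrite big_pred0 // eqxx.
Qed.


Ltac nameit t := let a := fresh "a" in set a := t; clearbody a.

Definition RX n (P : profile n) (VA : {set 'I_n}) :=
  [set i in VA | P i (B, n - #|VA| + RA_k P VA) (A, #|VA|)].

Lemma RA_step_eq n (P : profile n) (VA : {set 'I_n}) :
  RA_step P VA = if RA_k P VA == 0 then None else Some (VA :\: RX P VA).
Proof. by []. Qed.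

Lemma RX_sub n (P : profile n) (VA : {set 'I_n}) : RX P VA \subset VA.
Proof. by apply/subsetP=> i; rewrite inE => /andP[]. Qed.

Lemma RX_card n (P : profile n) (VA : {set 'I_n}) : RA_k P VA != 0 -> RA_k P VA <= #|RX P VA|.
Proof. by case/RA_k_pos. Qed.

Lemma cardsD_sub n (VA X : {set 'I_n}) : X \subset VA -> #|VA :\: X| = #|VA| - #|X|.
Proof. by move=> s; rewrite cardsD (setIidPr s). Qed.

Lemma run_sub n (P : profile n) fuel (VA : {set 'I_n}) : RA_run P fuel VA \subset VA.
Proof.
elim: fuel VA => [|f IH] VA /=; first exact: subxx.
rewrite RA_step_eq; case: eqP => _; first exact: subxx.
apply: subset_trans (IH _) _; exact: subsetDl.
Qed.

Lemma run_term n (P : profile n) fuel (VA : {set 'I_n}) : #|VA| < fuel -> RA_k P (RA_run P fuel VA) = 0.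
Proof.
elim: fuel VA => [|f IH] VA //= h.
rewrite RA_step_eq; case: eqP => [//|/eqP k0].
apply: IH; rewrite cardsD_sub ?RX_sub //.
have := RX_card k0; have [h0 h1 h2] := RA_k_pos k0. have h2' : RA_k P VA <= #|VA| by exact: h2. have [a ea] : {a | #|VA| = a} by exists #|VA|. rewrite ea in h h2' *. lia.
Qed.

Definition FA n (VA : {set 'I_n}) : assignment n := [ffun i => if i \in VA then A else B].

Lemma csize_FA_A n (VA : {set 'I_n}) : csize (FA VA) A = #|VA|.
Proof.
rewrite /csize; apply: eq_card => i; rewrite !inE ffunE; by case: (i \in VA).
Qed.

Lemma csize_FA_B n (VA : {set 'I_n}) : csize (FA VA) B = n - #|VA|.
Proof.
rewrite /csize (_ : [set v | FA VA v == B] = ~: VA).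
  have := cardsC VA; rewrite card_ord; nameit #|VA|; nameit #|~: VA|; lia.
apply/setP=> i; rewrite !inE ffunE; by case: (i \in VA).
Qed.

Lemma csizeAB n (g : assignment n) : csize g A + csize g B = n.
Proof.
rewrite /csize (_ : [set v | g v == B] = ~: [set v | g v == A]).
  by rewrite cardsC card_ord.
apply/setP=> i; rewrite !inE; by case: (g i).
Qed.

Lemma in_dom_out n (g : assignment n) i : in_dom n (outcome_of g i).
Proof.
rewrite /outcome_of; apply: indomP; last exact: card_le_n.
by apply/card_gt0P; exists i; rewrite inE.
Qed.


Definition goodB n (Q : profile n) (VA : {set 'I_n}) :=
  forall S : {set 'I_n}, S != set0 -> S \subset ~: VA ->
    ~ (forall s, s \in S -> Q s (A, #|VA| + #|S|) (B, n - #|VA|)).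

Lemma good_step n (Q : profile n) (VA : {set 'I_n}) : monotonic_profile Q ->
  RA_k Q VA != 0 -> goodB Q VA -> goodB Q (VA :\: RX Q VA).
Proof.
move=> mQ k0 gd S S0 sS allS.
have sX : RX Q VA \subset VA := RX_sub Q VA.
have [kpos _ kle] := RA_k_pos k0.
have kX := RX_card k0.
have ca' : #|VA :\: RX Q VA| = #|VA| - #|RX Q VA| := cardsD_sub sX.
have cX := subset_leq_card sX.
have cVA := card_le_n VA.
have cS : 0 < #|S| by rewrite card_gt0.
have hC := cardsC VA; rewrite card_ord in hC.
have hID := cardsID (~: VA) S.
have s2X : S :\: ~: VA \subset RX Q VA.
  apply/subsetP=> i; rewrite !inE => /andP[iVA iS].
  move: (subsetP sS i iS); rewrite !inE (negbNE iVA) andbT; exact: negbNE.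
have c2 := subset_leq_card s2X.
case: (eqVneq (S :&: ~: VA) set0) => [S10|S1n0].
- have [s sS'] : exists s, s \in S by apply/set0Pn.
  have hs := allS s sS'.
  have sSX : s \in RX Q VA.
    apply: (subsetP s2X); rewrite !inE sS' andbT.
    apply/negP=> sV; move/setP: S10 => /(_ s); rewrite !inE sS' sV; by [].
  move: (sSX); rewrite inE => /andP[_ hB].
  have c1 : #|S :&: ~: VA| = 0 by rewrite S10 cards0.
  have mo := mQ s.
  move: hs hB ca' kX cX cVA cS hC hID c2 c1 kpos kle.
  nameit #|VA :\: RX Q VA|; nameit #|VA|; nameit #|RX Q VA|; nameit #|S|;
  nameit #|~: VA|; nameit #|S :&: ~: VA|; nameit #|S :\: ~: VA|; nameit (RA_k Q VA).
  move=> hs hB *. clear S0 sS allS sX s2X S10 sS' sSX gd k0 mQ.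
  have hB' : Q s (B, n - a) (A, a0).
    apply: (mono_upl mo _ _ _ _ hB); try apply: indomP; lia.
  have hB'' : Q s (B, n - a) (A, a + a2).
    apply: (mono_downr mo _ _ _ _ hB'); try apply: indomP; lia.
  apply: (asym mo _ _ hs hB''); apply: indomP; lia.
- apply: (gd _ S1n0 (subsetIr _ _)) => t tS1.
  move: (tS1); rewrite !inE => /andP[tS tV].
  have ht := allS t tS.
  have mo := mQ t.
  have c1 : 0 < #|S :&: ~: VA| by rewrite card_gt0.
  have c1' := subset_leq_card (subsetIr S (~: VA)).
  move: ht ca' kX cX cVA cS hC hID c2 c1 c1' kpos kle.
  nameit #|VA :\: RX Q VA|; nameit #|VA|; nameit #|RX Q VA|; nameit #|S|;
  nameit #|~: VA|; nameit #|S :&: ~: VA|; nameit #|S :\: ~: VA|; nameit (RA_k Q VA).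
  move=> ht *. clear S0 sS allS sX s2X S1n0 tS1 tS tV gd k0 mQ.
  have h1 : Q t (A, a0 + a4) (B, n - a).
    apply: (mono_upl mo _ _ _ _ ht); try apply: indomP; lia.
  apply: (mono_downr mo _ _ _ _ h1); try apply: indomP; lia.
Qed.


Lemma good_run n (Q : profile n) fuel (VA : {set 'I_n}) : monotonic_profile Q ->
  goodB Q VA -> goodB Q (RA_run Q fuel VA).
Proof.
move=> mQ; elim: fuel VA => [|f IH] VA //= g.
rewrite RA_step_eq; case: eqP => [//|/eqP k0].
by apply: IH; apply: good_step.
Qed.

Lemma goodT n (Q : profile n) : goodB Q setT.
Proof.
move=> S S0 sS; move: S0; rewrite setCT subset0 in sS.
by rewrite (eqP sS) eqxx.
Qed.

Lemma FA_val n (F : {set 'I_n}) i : FA F i = if i \in F then A else B.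
Proof. by rewrite ffunE. Qed.

Lemma FA_in n (F : {set 'I_n}) i : i \in F -> outcome_of (FA F) i = (A, #|F|).
Proof. by move=> h; rewrite /outcome_of FA_val h csize_FA_A. Qed.

Lemma FA_out n (F : {set 'I_n}) i : i \notin F -> outcome_of (FA F) i = (B, n - #|F|).
Proof. by move=> h; rewrite /outcome_of FA_val (negbTE h) csize_FA_B. Qed.

Lemma R_A_FA n (Q : profile n) : R_A Q = FA (RA_run Q n.+1 setT).
Proof. by []. Qed.

Lemma stable_final n (Q : profile n) (F : {set 'I_n}) : monotonic_profile Q ->
  RA_k Q F = 0 -> goodB Q F -> stable Q (FA F).
Proof.
move=> mQ k0 gF [f' [ne sw]].
pose X := [set i in F | f' i == B].
pose Y := [set i in ~: F | f' i == A].
have sXF : X \subset F by apply/subsetP=> i; rewrite inE => /andP[].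
have sYF : Y \subset ~: F by apply/subsetP=> i; rewrite inE => /andP[].
have cA : csize f' A = #|F| - #|X| + #|Y|.
  have h1 := cardsID F [set v | f' v == A].
  have e1 : [set v | f' v == A] :&: F = F :\: X.
    apply/setP=> i; rewrite !inE; case: (i \in F); case: (f' i); by [].
  have e2 : [set v | f' v == A] :\: F = Y.
    apply/setP=> i; rewrite !inE; case: (i \in F); case: (f' i); by [].
  rewrite e1 e2 (cardsD_sub sXF) in h1.
  by rewrite /csize -h1.
have cAB := csizeAB f'.
have cF := card_le_n F.
have cX := subset_leq_card sXF.
have cY := subset_leq_card sYF.
have hC := cardsC F; rewrite card_ord in hC.
case: (leqP #|Y| #|X|) => hYX.
- case: (eqVneq X set0) => [X0|Xn0].
    have Y0 : Y = set0.
      apply/eqP; rewrite -cards_eq0; move: hYX; rewrite X0 cards0; lia.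
    apply: ne; apply/ffunP=> i; rewrite FA_val.
    case iF: (i \in F).
      case fi: (f' i) => //; move/setP: X0 => /(_ i); by rewrite !inE iF fi.
    case fi: (f' i) => //; move/setP: Y0 => /(_ i); by rewrite !inE iF fi.
  have hX : 0 < #|X| by rewrite card_gt0.
  have : #|X| <= RA_k Q F; last by rewrite k0; lia.
  apply: RA_k_max => //.
  rewrite /RA_count; apply: subset_leq_card; apply/subsetP=> i.
  rewrite !inE => /andP[iF fi].
  have hi := sw i; rewrite FA_val iF (eqP fi) in hi.
  have := hi (fun e => match e with end).
  rewrite /prefers (FA_in iF) /outcome_of (eqP fi) => hq.
  rewrite iF /=.
  have dom := in_dom_out f' i; rewrite /outcome_of (eqP fi) in dom.
  move: (dom) => /andP[/= d1 d2].
  move: hq; apply: (mono_upl (mQ i)).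
  + apply: indomP; move: hX cX cF; nameit #|X|; nameit #|F|; lia.
  + exact: d1.
  + move: cA cAB hYX d2 cX cF; nameit (csize f' A); nameit (csize f' B); nameit #|X|; nameit #|Y|; nameit #|F|; lia.
  + move: cX cF; nameit #|X|; nameit #|F|; lia.
- have Yn0 : Y != set0 by rewrite -card_gt0; lia.
  apply: (gF Y Yn0 sYF) => i.
  rewrite !inE => /andP[iF fi].
  have hi := sw i; rewrite FA_val (negbTE iF) (eqP fi) in hi.
  have := hi (fun e => match e with end).
  rewrite /prefers (FA_out iF) /outcome_of (eqP fi) => hq.
  have dom := in_dom_out f' i; rewrite /outcome_of (eqP fi) in dom.
  move: (dom) => /andP[/= d1 d2].
  move: hq; apply: (mono_upl (mQ i)).
  + apply: indomP; move: hC hYX cY cF; nameit #|~: F|; nameit #|X|; nameit #|Y|; nameit #|F|; lia.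
  + exact: d1.
  + move: cA cY hYX hC cF; nameit (csize f' A); nameit #|~: F|; nameit #|X|; nameit #|Y|; nameit #|F|; lia.
  + move: hC cY cF; nameit #|~: F|; nameit #|Y|; nameit #|F|; lia.
Qed.

Lemma RA_stable n (Q : profile n) : monotonic_profile Q -> stable Q (R_A Q).
Proof.
move=> mQ; rewrite R_A_FA; apply: stable_final => //.
  by apply: run_term; rewrite cardsT card_ord.
by apply: good_run => //; apply: goodT.
Qed.


Lemma lemA n (Q Q' : profile n) (U : {set 'I_n}) (g : assignment n) :
  monotonic_profile Q -> (forall i, i \notin U -> Q' i = Q i) -> stable Q' g ->
  forall fuel (VA : {set 'I_n}), [set i | g i == A] \subset VA ->
  (forall u, u \in U -> prefers (Q u) u g (FA (RA_run Q fuel VA))) ->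
  [set i | g i == A] \subset RA_run Q fuel VA.
Proof.
move=> mQ hQ' sg; elim=> [|f IH] VA //= gA.
rewrite RA_step_eq; case: eqP => [//|/eqP k0] hU.
apply: (IH (VA :\: RX Q VA)); last exact: hU.
set F := RA_run Q f (VA :\: RX Q VA).
set GA := [set i | g i == A].
apply/subsetP=> i iG; rewrite inE (subsetP gA i iG) andbT; apply/negP=> iX.
pose Z := RX Q VA :&: GA.
have iZ : i \in Z by rewrite inE iX iG.
have sX : RX Q VA \subset VA := RX_sub Q VA.
have [kpos _ kle] := RA_k_pos k0.
have kX := RX_card k0.
have ca' : #|VA :\: RX Q VA| = #|VA| - #|RX Q VA| := cardsD_sub sX.
have cX := subset_leq_card sX.
have cVA := card_le_n VA.
have cFs := subset_leq_card (run_sub Q f (VA :\: RX Q VA)).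
have cGA := subset_leq_card gA.
have cAB := csizeAB g.
have eGA : csize g A = #|GA| by [].
case: (pickP (fun u => (u \in Z) && (u \in U))) => [u /andP[uZ uU] | none].
- have := hU u uU.
  move: uZ; rewrite !inE => /andP[/andP[uV hB] gu].
  have uF : u \notin F.
    apply/negP=> uF; move: (subsetP (run_sub Q f (VA :\: RX Q VA)) u uF).
    by rewrite !inE uV hB.
  rewrite /prefers (FA_out uF) /outcome_of (eqP gu) => hq.
  have dom := in_dom_out g u; rewrite /outcome_of (eqP gu) in dom.
  move: (dom) => /andP[/= d1 d2].
  have mo := mQ u.
  move: hB hq ca' cX cVA cFs cGA eGA kpos kle kX d1 d2.
  nameit #|VA :\: RX Q VA|; nameit #|VA|; nameit #|RX Q VA|; nameit #|F|;
  nameit #|GA|; nameit (csize g A); nameit (RA_k Q VA).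
  move=> hB hq *. clear hU IH gA sg hQ' iG iX iZ uU uF dom sX mQ.
  have h1 : Q u (B, n - a2) (A, a0).
    apply: (mono_upl mo _ _ _ _ hB); try apply: indomP; lia.
  have h2 : Q u (B, n - a2) (A, a4).
    apply: (mono_downr mo _ _ _ _ h1); try apply: indomP; lia.
  apply: (asym mo _ _ hq h2); apply: indomP; lia.
- pose g' : assignment n := [ffun j => if j \in Z then B else g j].
  apply: sg; exists g'; split.
    move/ffunP/(_ i); rewrite ffunE iZ.
    by move: iG; rewrite inE => /eqP ->.
  move=> j; rewrite ffunE; case jZ: (j \in Z); last by [].
  move=> _.
  have jU : j \notin U by move: (none j); rewrite jZ /= => ->.
  rewrite /prefers (hQ' j jU).
  move: (jZ); rewrite !inE => /andP[/andP[jV hB] gj].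
  have cg'B : csize g' B = csize g B + #|Z|.
    rewrite /csize.
    have h := cardsID Z [set v | g' v == B].
    have e1 : [set v | g' v == B] :&: Z = Z.
      apply/setP=> v; rewrite in_setI in_set ffunE; case vZ: (v \in Z); by rewrite ?andbT ?andbF ?eqxx.
    have e2 : [set v | g' v == B] :\: Z = [set v | g v == B].
      apply/setP=> v; rewrite in_setD in_set ffunE in_set; case vZ: (v \in Z) => //=.
      by move: vZ; rewrite !inE => /andP[_ /eqP ->].
    rewrite e1 e2 in h; by rewrite -h addnC.
  have hZ : #|GA| <= #|VA| - #|RX Q VA| + #|Z|.
    have h := cardsID (RX Q VA) GA.
    have e1 : GA :&: RX Q VA = Z by rewrite setIC.
    rewrite e1 in h.
    have s2 : GA :\: RX Q VA \subset VA :\: RX Q VA.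
      apply/subsetP=> v /setDP[vG vX]; apply/setDP; split=> //; exact: (subsetP gA v vG).
    have := subset_leq_card s2; rewrite ca'.
    move: h; nameit #|GA :&: RX Q VA|; nameit #|Z|; nameit #|GA :\: RX Q VA|;
    nameit #|GA|; nameit #|VA :\: RX Q VA|; nameit #|VA|; nameit #|RX Q VA|; lia.
  have cZ : #|Z| <= #|GA| by apply: subset_leq_card; apply: subsetIr.
  have cZ1 : 0 < #|Z| by apply/card_gt0P; exists j.
  rewrite /outcome_of ffunE jZ (eqP gj).
  have mo := mQ j.
  move: hB cg'B hZ cZ cZ1 ca' cX cVA cGA eGA cAB kpos kle kX.
  nameit (csize g' B); nameit (csize g B); nameit (csize g A); nameit #|Z|;
  nameit #|VA :\: RX Q VA|; nameit #|VA|; nameit #|RX Q VA|;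
  nameit #|GA|; nameit (RA_k Q VA).
  move=> hB *. clear hU IH gA hQ' iG iX iZ jU jZ none mQ.
  have h1 : Q j (B, a) (A, a4).
    apply: (mono_upl mo _ _ _ _ hB); try apply: indomP; lia.
  apply: (mono_downr mo _ _ _ _ h1); try apply: indomP; lia.
Qed.


Definition swap_alt (s : alt) : alt := match s with A => B | B => A end.
Definition swapo (x : outcome) : outcome := (swap_alt x.1, x.2).
Definition swapP n (P : profile n) : profile n := fun i x y => P i (swapo x) (swapo y).
Definition swapF n (f : assignment n) : assignment n := [ffun i => swap_alt (f i)].

Lemma swap_altK s : swap_alt (swap_alt s) = s. Proof. by case: s. Qed.
Lemma swapoK x : swapo (swapo x) = x. Proof. by case: x => [[] j]. Qed.

Lemma mono_swap n (o : rel outcome) : monotonic_order n o ->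
  monotonic_order n (fun x y => o (swapo x) (swapo y)).
Proof.
case=> [[irr tr tot] mon]; split; [split|].
- by move=> x dx; apply: irr.
- by move=> x y z dx dy dz; apply: tr.
- move=> x y dx dy ne; apply: tot => // e; apply: ne.
  by rewrite -(swapoK x) e swapoK.
- by move=> S j k h1 h2 h3; apply: mon.
Qed.

Lemma csize_swap n (f : assignment n) S : csize (swapF f) S = csize f (swap_alt S).
Proof.
rewrite /csize; apply: eq_card => i; rewrite !inE ffunE.
by case: (f i); case: S.
Qed.

Lemma out_swap n (f : assignment n) i : outcome_of (swapF f) i = swapo (outcome_of f i).
Proof. by rewrite /outcome_of /swapo /= csize_swap ffunE swap_altK. Qed.

Lemma prefers_swap n (P : profile n) i g f :
  prefers (swapP P i) i (swapF g) (swapF f) = prefers (P i) i g f.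
Proof. by rewrite /prefers /swapP !out_swap !swapoK. Qed.

Lemma swapFK n (f : assignment n) : swapF (swapF f) = f.
Proof. by apply/ffunP=> i; rewrite !ffunE swap_altK. Qed.

Lemma stable_swap n (P : profile n) f : stable P f -> stable (swapP P) (swapF f).
Proof.
move=> sP [f' [ne sw]]; apply: sP; exists (swapF f'); split.
  by move=> e; apply: ne; rewrite -e swapFK.
move=> i h.
have h' : f' i <> swapF f i.
  by move=> e; apply: h; rewrite ffunE e ffunE swap_altK.
have := sw i h'; rewrite -prefers_swap swapFK.
by rewrite /prefers /swapP !swapoK.
Qed.

Lemma stable_ext n (Q1 Q2 : profile n) f : (forall i x y, Q1 i x y = Q2 i x y) ->
  stable Q1 f -> stable Q2 f.
Proof.
move=> e s [f' [ne sw]]; apply: s; exists f'; split=> // i h.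
by rewrite /prefers e; apply: sw.
Qed.

Unset Implicit Arguments.
Theorem theorem4 (n : nat) :
  group_strategyproof (@R_A n)
    (fun P : profile n => monotonic_profile P /\ unique_stable P).
Proof.
move=> P [mP [f0 [sf0 uniq]]] [U [P' [U0 hP' mP' pref]]].
have mP'all : monotonic_profile P'.
  move=> i; case: (boolP (i \in U)) => iU; first exact: mP'.
  by rewrite hP'.
have ef : R_A P = f0 := uniq _ (RA_stable mP).
have sg : stable P' (R_A P') := RA_stable mP'all.
have h1 := @lemA n P P' U (R_A P') mP hP' sg n.+1 setT (subsetT _) pref.
have mQs : monotonic_profile (swapP P) by move=> i; apply: mono_swap.
have hQs : forall i, i \notin U -> swapP P' i = swapP P i.
  by move=> i iU; rewrite /swapP (hP' i iU).
have sh := RA_stable mQs.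
have sh2 : stable P (swapF (R_A (swapP P))).
  apply: (stable_ext _ (stable_swap sh)) => i x y.
  by rewrite /swapP !swapoK.
have eh : R_A (swapP P) = swapF (R_A P).
  by rewrite ef -(uniq _ sh2) swapFK.
have pref2 : forall u, u \in U ->
    prefers (swapP P u) u (swapF (R_A P')) (FA (RA_run (swapP P) n.+1 setT)).
  by move=> u uU; rewrite -R_A_FA eh prefers_swap; apply: pref.
have h2 := @lemA n (swapP P) (swapP P') U (swapF (R_A P')) mQs hQs
   (stable_swap sg) n.+1 setT (subsetT _) pref2.
have egf : R_A P' = R_A P.
  apply/ffunP=> i; case gi: (R_A P' i).
    have := subsetP h1 i; rewrite inE gi => /(_ isT) hi.
    by rewrite R_A_FA FA_val hi.
  have := subsetP h2 i; rewrite inE ffunE gi => /(_ isT) hi.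
  have : R_A (swapP P) i = A by rewrite R_A_FA FA_val hi.
  by rewrite eh ffunE; case: (R_A P i).
have [u uU] : exists u, u \in U by apply/set0Pn.
have := pref u uU; rewrite egf /prefers.
have [[irr _ _] _] := mP u.
by move/negP: (irr _ (in_dom_out (R_A P) u)).
Qed.
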